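(* The map $f$ is a bijection from the set of all permutations onto $\widehat{\mathcal{A}}$, with inverse $g$; that is, $f(g(w))=w$ for all $w\in\widehat{\mathcal{A}}$ and $g(f(\pi))=\pi$ for all permutations $\pi$.
   Context: A permutation of length $n\ge1$ is a word $\pi=\pi_1\cdots\pi_n$ containing each of $1,\dots,n$ exactly once. A descent of $\pi$ is an index $i$ with $\pi_i>\pi_{i+1}$. A run of $\pi$ is a maximal consecutive increasing sequence of letters; for a letter $c$ of $\pi$, $d_\pi(c)$ denotes the index of the run containing $c$, i.e. $1$ plus the number of descents at indices before the position of $c$. Words are finite sequences over the positive integers; $\max(w)$ is the largest letter of $w$. $\widehat{\mathcal{A}}$ is the set of words $w$ such that (AC1) every $i\in\{1,\dots,\max(w)\}$ occurs in $w$, and (AC2) for every $i\in\{1,\dots,\max(w)-1\}$, the rightmost occurrence of $i$ in $w$ is preceded by an occurrence of $i+1$. For a word $w$ and letter $j$, $p_w(j)$ is the list of positions $i$ with $w_i=j$, in increasing order. Define $f(\pi)=d_\pi(1)d_\pi(2)\cdots d_\pi(n)$ for a permutation $\pi$ of length $n$, and $g(w)$ to be the concatenation $p_w(1)p_w(2)\cdots p_w(\max(w))$ for $w\in\widehat{\mathcal{A}}$. *)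

(* Defs.v *)
(* Words and permutations are represented as [seq nat];
   positions and letters are 1-based as in the paper. *)
From mathcomp Require Import all_boot.
Set Implicit Arguments. Unset Strict Implicit. Unset Printing Implicit Defensive.

Definition is_perm (s : seq nat) : bool :=
  (0 < size s) && perm_eq s (iota 1 (size s)).

Definition letter (w : seq nat) (i : nat) : nat := nth 0 w i.-1.

Definition run_index (s : seq nat) (c : nat) : nat :=
  (count (fun i => letter s i.+1 < letter s i) (iota 1 (index c s))).+1.

Definition f_map (s : seq nat) : seq nat := map (run_index s) (iota 1 (size s)).

Definition wmax (w : seq nat) : nat := foldr maxn 0 w.

(* 1-based position of the rightmost occurrence of i in w (assumes i \in w) *)
Definition last_pos (w : seq nat) (i : nat) : nat := size w - index i (rev w).

Definition AC1 (w : seq nat) : bool := all (fun i => i \in w) (iota 1 (wmax w)).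

Definition AC2 (w : seq nat) : bool :=
  all (fun i => i.+1 \in take (last_pos w i).-1 w) (iota 1 (wmax w).-1).

Definition inAhat (w : seq nat) : bool :=
  [&& 0 < size w, all (fun x => 0 < x) w, AC1 w & AC2 w].

Definition positions (w : seq nat) (j : nat) : seq nat :=
  [seq i <- iota 1 (size w) | letter w i == j].

Definition g_map (w : seq nat) : seq nat :=
  flatten [seq positions w j | j <- iota 1 (wmax w)].

(* Main.v *)
Require Import Defs.
From mathcomp Require Import all_boot zify.
Set Implicit Arguments. Unset Strict Implicit.

Definition D (s : seq nat) k := count (fun j => nth 0 s j.+1 < nth 0 s j) (iota 0 k).

Lemma run_indexE s c : run_index s c = (D s (index c s)).+1.
Proof.
rewrite /run_index /D; congr S.
by rewrite -[1]addn0 iotaDl count_map.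
Qed.

Lemma D0 s : D s 0 = 0. Proof. by []. Qed.

Lemma D_cons a s k : D (a :: s) k.+1 = (nth 0 s 0 < a) + D s k.
Proof.
rewrite /D /= -[1]addn0 iotaDl count_map; congr (_ + _).
Qed.

Lemma sorted_head_le (A : seq nat) x : sorted ltn A -> x \in A -> nth 0 A 0 <= x.
Proof.
case: A => // a A /= Hp; rewrite inE => /orP[/eqP->//|xA].
have := order_path_min ltn_trans Hp => /allP /(_ x xA); lia.
Qed.

Lemma sorted_last_ge (A : seq nat) x : sorted ltn A -> x \in A -> x <= last 0 A.
Proof.
elim: A x => // a A IH x /= Hp; rewrite inE => /orP[/eqP->|xA].
  case: A IH Hp => //= b A IH /andP[ab Hp].
  have := IH b Hp (mem_head _ _) => /=; lia.
case: A IH Hp xA => //= b A IH /andP[ab Hp] xA.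
by have := IH x Hp xA.
Qed.

Lemma D_block_lt (B t : seq nat) k : sorted ltn B -> k < size B -> D (B ++ t) k = 0.
Proof.
elim: B k => // a B IH [|k] //= Hp Hk.
rewrite D_cons IH //; last by apply: path_sorted Hp.
case: B IH Hp Hk => //= b B _ /andP[ab _] _; rewrite ltnNge (ltnW ab) //.
Qed.

Lemma D_block_ge (B t : seq nat) k : B != [::] -> sorted ltn B ->
  nth 0 t 0 < last 0 B -> D (B ++ t) (size B + k) = (D t k).+1.
Proof.
elim: B => // a B IH _ /= Hp Hl.
rewrite addSn D_cons.
case: B IH Hp Hl => [|b B] IH Hp Hl /=.
  by rewrite Hl add1n.
move: Hp => /= /andP[ab Hp].
rewrite IH //= ltnNge (ltnW ab) //.

Qed.
Definition good (bs : seq (seq nat)) : Prop :=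
  (forall k, k < size bs -> nth [::] bs k != [::] /\ sorted ltn (nth [::] bs k)) /\
  (forall k, k.+1 < size bs -> nth 0 (nth [::] bs k.+1) 0 < last 0 (nth [::] bs k)).

Lemma good_tail B bs : good (B :: bs) -> good bs.
Proof. move=> [H1 H2]; split=> k Hk; [exact: (H1 k.+1) | exact: (H2 k.+1)]. Qed.

Lemma core bs k x : good bs -> uniq (flatten bs) -> k < size bs ->
  x \in nth [::] bs k -> D (flatten bs) (index x (flatten bs)) = k.
Proof.
elim: bs k => // B bs IH [|k] Hg Hu Hk /= Hx.
  have [Bn Bs] := (Hg.1 0 isT).
  by rewrite index_cat Hx D_block_lt // index_mem.
move: Hu => /=; rewrite cat_uniq => /and3P[_ Hdis Hu].
have xF : x \in flatten bs by apply/flattenP; exists (nth [::] bs k) => //; apply: mem_nth.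
have xB : x \notin B by apply: contra Hdis => xB; apply/hasP; exists x.
have [Bn Bs] := (Hg.1 0 isT).
rewrite index_cat (negbTE xB) D_block_ge //.
  by rewrite (IH k (good_tail Hg) Hu Hk Hx).
clear Bn Bs; case: bs IH Hg Hdis Hu Hk Hx xF xB => // C bs _ Hg _ _ _ _ _ _ /=.
have := Hg.2 0 isT => /=.
have [Cn _] := (Hg.1 1 isT) => /=.
move: Cn; rewrite /=; clear Hg; by case: C.
Qed.

Lemma run_index_block bs k x : good bs -> uniq (flatten bs) -> k < size bs ->
  x \in nth [::] bs k -> run_index (flatten bs) x = k.+1.
Proof. by move=> *; rewrite run_indexE (core (k:=k)). Qed.

Lemma wmax_ge (w : seq nat) (x : nat) : x \in w -> x <= wmax w.
Proof.
elim: w => // a w IH; rewrite inE /= => /orP[/eqP->|/IH]; first exact: leq_maxl.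
move=> H; apply: leq_trans H (leq_maxr _ _).
Qed.

Lemma wmax_le (w : seq nat) (b : nat) : (forall x, x \in w -> x <= b) -> wmax w <= b.
Proof.
elim: w => //= a w IH H; rewrite geq_max H ?mem_head //=.
by apply: IH => x xw; apply: H; rewrite inE xw orbT.
Qed.

Lemma index_char (s : seq nat) x i : i < size s -> nth 0 s i = x ->
  (forall i', i' < i -> nth 0 s i' != x) -> index x s = i.
Proof.
elim: s i => // a s IH [|i] /= Hi Hn H.
  by rewrite Hn eqxx.
have := H 0 isT => /= /negbTE; rewrite eq_sym => ->.
by rewrite (IH i) // => i' Hi'; apply: (H i'.+1).
Qed.

Lemma last_posE (w : seq nat) (j p : nat) : 1 <= p <= size w -> letter w p = j ->
  (forall q, p < q <= size w -> letter w q != j) -> last_pos w j = p.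
Proof.
move=> /andP[p1 pn] Hl Hq; rewrite /last_pos.
rewrite (@index_char _ _ (size w - p)).
- lia.
- rewrite ?size_rev; lia.
- rewrite nth_rev; last lia.
  rewrite -Hl /letter; congr nth; lia.
move=> i' Hi'; rewrite nth_rev; last (rewrite ?size_rev; lia).
have := Hq (size w - i') ltac:(lia); rewrite /letter.
by have -> : (size w - i').-1 = size w - i'.+1 by lia.
Qed.

Lemma last_pos_spec (w : seq nat) (j : nat) : j \in w ->
  1 <= last_pos w j <= size w /\ letter w (last_pos w j) = j.
Proof.
move=> jw; rewrite /last_pos.
have Hi : index j (rev w) < size w by rewrite -size_rev index_mem mem_rev.
split; first lia.
have := nth_index 0 (_ : j \in rev w); rewrite mem_rev => /(_ jw).
rewrite nth_rev // /letter => H.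
have -> : (size w - index j (rev w)).-1 = size w - (index j (rev w)).+1 by lia.
exact: H.
Qed.

Lemma mem_take_nth (s : seq nat) k q : q < k -> q < size s -> nth 0 s q \in take k s.
Proof.
move=> qk qs; rewrite -(nth_take 0 qk); apply: mem_nth; rewrite size_take_min leq_min qk /=; exact: qs.
Qed.

Lemma mem_take_inv (s : seq nat) k x : x \in take k s ->
  exists q, [/\ q < k, q < size s & nth 0 s q = x].
Proof.
move=> /(nthP 0) [i]; rewrite size_take_min leq_min => /andP[H1 H2] <-.
by exists i; rewrite nth_take.
Qed.

Lemma map_letter w : map (letter w) (iota 1 (size w)) = w.
Proof.
rewrite -[1]addn0 iotaDl -map_comp.
have -> : letter w \o addn 1 = nth 0 w by [].
exact: mkseq_nth.
Qed.

Lemma map_nth_iota1 (bs : seq (seq nat)) :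
  map (fun j => nth [::] bs j.-1) (iota 1 (size bs)) = bs.
Proof.
rewrite -[1]addn0 iotaDl -map_comp.
exact: mkseq_nth.
Qed.

Lemma uniq_flatten_filter (s : seq nat) (f : nat -> nat) js : uniq s -> uniq js ->
  uniq (flatten [seq [seq x <- s | f x == j] | j <- js]).
Proof.
move=> us; elim: js => //= j js IH /andP[jn ujs].
rewrite cat_uniq filter_uniq // IH // andbT.
apply/hasPn => x /flattenP [c /mapP [j' j'js ->]]; rewrite !mem_filter.
move=> /andP[/eqP fx _]; apply/negP => /andP[/eqP fx' _].
by move: jn; rewrite -fx' fx j'js.
Qed.

Lemma dir2 (w : seq nat) : inAhat w -> is_perm (g_map w) /\ f_map (g_map w) = w.
Proof.
move=> /and4P[wn wpos ac1 ac2].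
set n := size w in wn *; set m := wmax w in ac1 ac2 *.
set bs := [seq positions w j | j <- iota 1 m].
have gE : g_map w = flatten bs by [].
have letter_in : forall x, x \in iota 1 n -> 0 < letter w x <= m.
  move=> x; rewrite mem_iota => /andP[x1 xn].
  have lw : letter w x \in w by apply: mem_nth; rewrite -/n; lia.
  by rewrite (allP wpos _ lw) wmax_ge.
have memP : forall j x, (x \in positions w j) = (x \in iota 1 n) && (letter w x == j).
  by move=> j x; rewrite mem_filter andbC.
have szbs : size bs = m by rewrite size_map size_iota.
have nthbs : forall k, k < m -> nth [::] bs k = positions w k.+1.
  by move=> k Hk; rewrite (nth_map 0) ?size_iota // nth_iota.
have Hu : uniq (flatten bs) by apply: uniq_flatten_filter; apply: iota_uniq.
have Hmem : flatten bs =i iota 1 n.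
  move=> x; apply/flattenP/idP.
    by move=> [c /mapP[j jm ->]]; rewrite memP => /andP[].
  move=> Hx; exists (positions w (letter w x)); last by rewrite memP Hx eqxx.
  apply: map_f; rewrite mem_iota; have := letter_in x Hx; lia.
have Hperm : perm_eq (flatten bs) (iota 1 n) by apply: uniq_perm => //; apply: iota_uniq.
have Hsz : size (flatten bs) = n by rewrite (perm_size Hperm) size_iota.
have Hgood : good bs.
  split.
  - move=> k; rewrite szbs => Hk; rewrite nthbs //; split.
      have : k.+1 \in w by apply: (allP ac1); rewrite mem_iota; lia.
      move=> /(nthP 0)[i Hi Hwi]; apply/eqP => E.
      have : i.+1 \in positions w k.+1.
        by rewrite memP mem_iota /letter /= Hwi eqxx andbT; rewrite -/n in Hi; lia.
      by rewrite E.
    by apply: sorted_filter; [exact: ltn_trans | exact: iota_ltn_sorted].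
  - move=> k; rewrite szbs => Hk; rewrite !nthbs //; last lia.
    have jw : k.+1 \in w by apply: (allP ac1); rewrite mem_iota; lia.
    have := allP ac2 k.+1; rewrite mem_iota => /(_ ltac:(lia)).
    move=> /mem_take_inv [q [q1 q2 q3]].
    have [lp1 lp2] := last_pos_spec jw.
    have h1 : nth 0 (positions w k.+2) 0 <= q.+1.
      apply: sorted_head_le.
        by apply: sorted_filter; [exact: ltn_trans | exact: iota_ltn_sorted].
      by rewrite memP mem_iota /letter /= q3 eqxx andbT; rewrite -/n in q2; lia.
    have h2 : last_pos w k.+1 <= last 0 (positions w k.+1).
      apply: sorted_last_ge.
        by apply: sorted_filter; [exact: ltn_trans | exact: iota_ltn_sorted].
      by rewrite memP mem_iota lp2 eqxx andbT; rewrite -/n in lp1; lia.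
    lia.
split.
  by rewrite /is_perm gE Hsz wn.
rewrite /f_map gE Hsz.
transitivity (map (letter w) (iota 1 n)); last exact: map_letter.
apply/eq_in_map => x Hx.
have [l1 l2] := andP (letter_in x Hx).
rewrite (@run_index_block bs (letter w x).-1) //.
  lia.
  rewrite szbs; lia.
rewrite nthbs; last lia.
by rewrite prednK // memP Hx eqxx.
Qed.

Lemma last_mem (A : seq nat) : A != [::] -> last 0 A \in A.
Proof. by case: A => // a A _; exact: mem_last. Qed.

Lemma head_mem (A : seq nat) : A != [::] -> nth 0 A 0 \in A.
Proof. by case: A => // a A _; exact: mem_head. Qed.

Lemma runs_exist (s : seq nat) : s != [::] -> uniq s ->
  exists bs, good bs /\ flatten bs = s.
Proof.
elim: s => // a s IH _ /andP[an us].
case: s IH an us => [|b0 s'] IH an us.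
  exists [:: [:: a]]; split => //; split => [[|k]|k] //=.
have [bs [[Hg1 Hg2] Hf]] := IH isT us.
case: bs Hg1 Hg2 Hf => [|B0 rest] Hg1 Hg2 Hf //.
have [B0n B0s] := Hg1 0 isT.
case: B0 B0n B0s Hg1 Hg2 Hf => [|b B0'] // _ B0s Hg1 Hg2 Hf.
move: Hf => /= [eb Hf]; subst b0.
have ab : a != b by apply: contra an => /eqP ->; rewrite mem_head.
case: (ltngtP a b) => [lab|lba|eab]; last by rewrite eab eqxx in ab.
- exists ((a :: b :: B0') :: rest); split; last by rewrite /= Hf.
  split.
  + move=> [|k] Hk /=; first by rewrite lab.
    exact: (Hg1 k.+1).
  + move=> [|k] Hk; first exact: (Hg2 0).
    exact: (Hg2 k.+1).
- exists ([:: a] :: (b :: B0') :: rest); split; last by rewrite /= Hf.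
  split.
  + move=> [|k] Hk //=; exact: (Hg1 k).
  + move=> [|k] Hk //=; exact: (Hg2 k).
Qed.

Lemma dir1 (s : seq nat) : is_perm s -> inAhat (f_map s) /\ g_map (f_map s) = s.
Proof.
move=> /andP[sn sp].
have us : uniq s by rewrite (perm_uniq sp) iota_uniq.
have smem : s =i iota 1 (size s) := perm_mem sp.
have [bs [Hg Hf]] : exists bs, good bs /\ flatten bs = s.
  by apply: runs_exist => //; case: s sn {sp us smem}.
have Hu : uniq (flatten bs) by rewrite Hf.
set n := size s in sn smem *.
set r := run_index s.
set w := f_map s.
have wE : w = map r (iota 1 n) by [].
set m := size bs.
have blk_sub : forall k x, k < m -> x \in nth [::] bs k -> x \in iota 1 n.
  move=> k x Hk Hx; rewrite -smem -Hf; apply/flattenP.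
  by exists (nth [::] bs k) => //; apply: mem_nth.
have rA : forall k x, k < m -> x \in nth [::] bs k -> r x = k.+1.
  by move=> k x Hk Hx; rewrite /r -Hf; apply: run_index_block.
have rB : forall x, x \in iota 1 n -> exists2 k, k < m & x \in nth [::] bs k.
  move=> x; rewrite -smem -Hf => /flattenP [c /(nthP [::]) [k Hk <-] Hx].
  by exists k.
have m0 : 0 < m.
  rewrite lt0n; apply/eqP => E; move: sn; rewrite /n -Hf.
  by move: E; rewrite /m; case: bs {Hg Hf Hu blk_sub rA rB m}.
have letE : forall x, x \in iota 1 n -> letter w x = r x.
  move=> x; rewrite mem_iota => /andP[x1 xn].
  rewrite wE /letter (nth_map 0); last by rewrite size_iota; lia.
  rewrite nth_iota; last lia.
  by congr r; lia.
have szw : size w = n by rewrite wE size_map size_iota.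
have wmaxE : wmax w = m.
  apply/eqP; rewrite eqn_leq; apply/andP; split.
    apply: wmax_le => y; rewrite wE => /mapP [x Hx ->].
    by have [k Hk Hxk] := rB x Hx; rewrite (rA k x Hk Hxk).
  have [Bn _] := Hg.1 m.-1 ltac:(lia).
  have Hx := head_mem Bn.
  have := rA m.-1 _ ltac:(lia) Hx; rewrite prednK // => <-.
  by apply: wmax_ge; rewrite wE; apply: map_f; apply: (blk_sub m.-1); first lia.
have posE : forall j, 0 < j <= m -> positions w j = nth [::] bs j.-1.
  move=> j /andP[j1 jm].
  have [Bn Bs] := Hg.1 j.-1 ltac:(lia).
  apply: (irr_sorted_eq ltn_trans ltnn) => //.
    by apply: sorted_filter; [exact: ltn_trans | exact: iota_ltn_sorted].
  move=> x; rewrite mem_filter szw; apply/andP/idP.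
    move=> [/eqP Hl Hx]; rewrite letE // in Hl.
    have [k Hk Hxk] := rB x Hx.
    have := rA k x Hk Hxk; rewrite Hl => Ejk.
    by have -> : j.-1 = k by lia.
  move=> Hx; have Hxi := blk_sub j.-1 _ ltac:(lia) Hx.
  by rewrite letE // (rA j.-1 _ ltac:(lia) Hx) prednK // eqxx.
split; last first.
  rewrite /g_map wmaxE.
  transitivity (flatten (map (fun j => nth [::] bs j.-1) (iota 1 m))); last first.
    by rewrite map_nth_iota1.
  congr flatten; apply/eq_in_map => j; rewrite mem_iota => Hj.
  apply: posE; lia.
rewrite /inAhat szw sn /=.
apply/and3P; split.
- apply/allP => y; rewrite wE => /mapP [x _ ->]; by rewrite /r run_indexE.
- rewrite /AC1 wmaxE; apply/allP => j; rewrite mem_iota => Hj.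
  have [Bn _] := Hg.1 j.-1 ltac:(lia).
  have Hx := head_mem Bn.
  have := rA j.-1 _ ltac:(lia) Hx; rewrite prednK; last lia.
  move=> <-; rewrite wE; apply: map_f; apply: (blk_sub j.-1) => //; lia.
- rewrite /AC2 wmaxE; apply/allP => j; rewrite mem_iota => Hj.
  have hj3 : 0 < j by case/andP: Hj.
  have hj2 : j < m by move: Hj m0; clear; lia.
  have hj1 : j.-1 < m by move: hj2; clear; lia.
  have hjj : j.-1.+1 = j by rewrite prednK.
  have [An As] := Hg.1 j.-1 hj1.
  have [Cn Cs] := Hg.1 j hj2.
  have Hd := Hg.2 j.-1 ltac:(by rewrite hjj); rewrite hjj in Hd.
  set A := nth [::] bs j.-1 in An As Hd.
  set C := nth [::] bs j in Cn Cs Hd.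
  have LA := last_mem An.
  have hC := head_mem Cn.
  have Li := blk_sub j.-1 _ hj1 LA.
  have hi := blk_sub j _ hj2 hC.
  have rL : r (last 0 A) = j by rewrite (rA j.-1 _ hj1 LA) hjj.
  have rh : r (nth 0 C 0) = j.+1 by rewrite (rA j _ hj2 hC).
  have lpE : last_pos w j = last 0 A.
    apply: last_posE.
    - by rewrite szw; move: Li; rewrite mem_iota; clear; lia.
    - by rewrite letE.
    move=> q Hq; have Hqi : q \in iota 1 n.
      by rewrite mem_iota; rewrite szw in Hq; move: Hq Li; rewrite mem_iota; clear; lia.
    rewrite letE //; apply/eqP => Eq.
    have [k Hk Hqk] := rB q Hqi.
    have := rA k q Hk Hqk; rewrite Eq => Ek.
    have Ekj : k = j.-1 by rewrite Ek.
    rewrite Ekj -/A in Hqk.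
    have := sorted_last_ge As Hqk; move: Hq; clear; lia.
  rewrite lpE.
  move: hi Li; rewrite !mem_iota => hi Li.
  have h1 : (nth 0 C 0).-1 < (last 0 A).-1 by move: Hd hi; clear; lia.
  have h2 : (nth 0 C 0).-1 < size w by rewrite szw; move: hi; clear; lia.
  have := @mem_take_nth w (last 0 A).-1 (nth 0 C 0).-1 h1 h2.
  suff -> : nth 0 w (nth 0 C 0).-1 = j.+1 by [].
  by rewrite -rh -letE // mem_iota.
Qed.

Theorem mainTheorem2 :
  (forall s : seq nat, is_perm s -> inAhat (f_map s) /\ g_map (f_map s) = s) /\
  (forall w : seq nat, inAhat w -> is_perm (g_map w) /\ f_map (g_map w) = w).
Proof. split; [exact: dir1 | exact: dir2]. Qed.
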